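(* Assume the bound condition (B) holds with constants $A,D>0$ and that $\max\{\Delta x,\Delta y\}\le 2D/A$. Let $f$ be arbitrary (not necessarily zero) and let $\psi,\tilde\psi$ be two initial data. Let $v$ be a grid function satisfying the scheme (IFDS) with initial datum $\psi$ and $\tilde v$ a grid function satisfying the scheme (IFDS) with the same $a,b,c,d,f$ and initial datum $\tilde\psi$. Put $\varepsilon_{i,j}^k=v_{i,j}^k-\tilde v_{i,j}^k$ and $\|E^k\|_\infty=\max_{1\le i\le N_x-1,\,1\le j\le N_y-1}|\varepsilon_{i,j}^k|$. Then $$\|E^k\|_\infty\le\|E^0\|_\infty\qquad\text{for all }k=1,\dots,N_t.$$
   Context: Fix $0<\alpha<1$, $T>0$ and a rectangle $\Omega=(x_L,x_R)\times(y_L,y_R)$. Let $a,b,c,d,f$ be real functions on $\overline\Omega\times[0,T]$ and $\psi$ a real function on $\overline\Omega$. Grid: for positive integers $N_x,N_y,N_t$ put $\Delta x=(x_R-x_L)/N_x$, $\Delta y=(y_R-y_L)/N_y$, $\Delta t=T/N_t$, $x_i=x_L+i\Delta x$, $y_j=y_L+j\Delta y$, $t_k=k\Delta t$, and for a function $g$ write $g_{i,j}^k=g(x_i,y_j,t_k)$. Let $\sigma_{\alpha,\Delta t}=\frac{1}{(\Delta t)^\alpha\Gamma(2-\alpha)}$ and $\omega_s=(s+1)^{1-\alpha}-s^{1-\alpha}$ for $s\ge0$. Scheme (IFDS) with initial datum $\psi$: a grid function $(v_{i,j}^k)_{0\le i\le N_x,\,0\le j\le N_y,\,0\le k\le N_t}$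 with $v_{i,j}^0=\psi(x_i,y_j)$, $v_{i,j}^k=0$ whenever $i\in\{0,N_x\}$ or $j\in\{0,N_y\}$ (for $k\ge1$), and for all $1\le i\le N_x-1$, $1\le j\le N_y-1$, $0\le k\le N_t-1$: $$\sigma_{\alpha,\Delta t}\sum_{s=0}^{k}\omega_s\big(v_{i,j}^{k-s+1}-v_{i,j}^{k-s}\big)+a_{i,j}^{k+1}\frac{v_{i+1,j}^{k+1}-v_{i-1,j}^{k+1}}{2\Delta x}+b_{i,j}^{k+1}\frac{v_{i,j+1}^{k+1}-v_{i,j-1}^{k+1}}{2\Delta y}$$ $$=c_{i,j}^{k+1}\frac{v_{i+1,j}^{k+1}-2v_{i,j}^{k+1}+v_{i-1,j}^{k+1}}{(\Delta x)^2}+d_{i,j}^{k+1}\frac{v_{i,j+1}^{k+1}-2v_{i,j}^{k+1}+v_{i,j-1}^{k+1}}{(\Delta y)^2}+f_{i,j}^{k+1}.$$ Bound condition (B): there are constants $A>0$, $D>0$ such that for all $(x,y,t)\in\overline\Omega\times[0,T]$: $0\le a(x,y,t)\le A$, $0\le b(x,y,t)\le A$, $c(x,y,t)\ge D$, $d(x,y,t)\ge D$. *)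

(* Defs.v *)
From Stdlib Require Import Reals Lra Lia List Arith Factorial.
Open Scope R_scope.

(* Gamma function, characterized (for s > 0) by Gauss's product limit
   Gamma(s) = lim_{n->oo} n! n^s / (s (s+1) ... (s+n)). *)
Definition gauss_seq (s : R) (n : nat) : R :=
  INR (fact n) * Rpower (INR n) s / prod_f_R0 (fun m => s + INR m) n.

Definition is_Gamma (s G : R) : Prop := Un_cv (gauss_seq s) G.

Definition natpow (s : nat) (e : R) : R :=
  match s with O => 0 | _ => Rpower (INR s) e end.

Definition omega (alpha : R) (s : nat) : R :=
  natpow (S s) (1 - alpha) - natpow s (1 - alpha).

(* sigma_{alpha,dt} = 1 / (dt^alpha * Gamma(2-alpha)), Gamma(2-alpha) = G *)
Definition sigma (alpha dt G : R) : R := / (Rpower dt alpha * G).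

Definition IFDS (alpha G xL xR yL yR T : R) (Nx Ny Nt : nat)
    (a b c d f : R -> R -> R -> R) (psi : R -> R -> R)
    (v : nat -> nat -> nat -> R) : Prop :=
  let dx := (xR - xL) / INR Nx in
  let dy := (yR - yL) / INR Ny in
  let dt := T / INR Nt in
  let x i := xL + INR i * dx in
  let y j := yL + INR j * dy in
  let t k := INR k * dt in
  (forall i j, (i <= Nx)%nat -> (j <= Ny)%nat -> v i j 0%nat = psi (x i) (y j)) /\
  (forall i j k, (i <= Nx)%nat -> (j <= Ny)%nat -> (1 <= k <= Nt)%nat ->
     (i = 0%nat \/ i = Nx \/ j = 0%nat \/ j = Ny) -> v i j k = 0) /\
  (forall i j k, (1 <= i <= Nx - 1)%nat -> (1 <= j <= Ny - 1)%nat -> (k <= Nt - 1)%nat ->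
     sigma alpha dt G *
       sum_f_R0 (fun s => omega alpha s * (v i j (k - s + 1)%nat - v i j (k - s)%nat)) k
     + a (x i) (y j) (t (S k)) * (v (S i) j (S k) - v (i - 1)%nat j (S k)) / (2 * dx)
     + b (x i) (y j) (t (S k)) * (v i (S j) (S k) - v i (j - 1)%nat (S k)) / (2 * dy)
     = c (x i) (y j) (t (S k)) * (v (S i) j (S k) - 2 * v i j (S k) + v (i - 1)%nat j (S k)) / (dx * dx)
     + d (x i) (y j) (t (S k)) * (v i (S j) (S k) - 2 * v i j (S k) + v i (j - 1)%nat (S k)) / (dy * dy)
     + f (x i) (y j) (t (S k))).

(* max over interior nodes 1<=i<=Nx-1, 1<=j<=Ny-1 of |e i j| (0 if no interior node) *)
Definition interior_max (Nx Ny : nat) (e : nat -> nat -> R) : R :=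
  fold_right Rmax 0
    (flat_map (fun i => map (fun j => Rabs (e i j)) (seq 1 (Ny - 1)))
              (seq 1 (Nx - 1))).

(* Main.v *)
Require Import Defs.
From Stdlib Require Import Reals Lra Lia List Arith Factorial.
Open Scope R_scope.

Lemma Rpower_base1 s : Rpower 1 s = 1.
Proof. unfold Rpower. rewrite ln_1, Rmult_0_r. apply exp_0. Qed.

Lemma bernoulli x r : -1 < x -> 1 <= r -> 1 + r * x <= Rpower (1 + x) r.
Proof.
  intros Hx Hr.
  replace r with (1 + (r - 1)) at 2 by ring.
  rewrite Rpower_plus, Rpower_1 by lra.
  assert (Hl : x / (1 + x) <= ln (1 + x)).
  { assert (H1 := exp_ineq1_le (ln (/ (1 + x)))).
    rewrite exp_ln in H1 by (apply Rinv_0_lt_compat; lra).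
    rewrite ln_Rinv in H1 by lra.
    assert (E : / (1 + x) = 1 - x / (1 + x)) by (field; lra).
    lra. }
  assert (He : 1 + (r - 1) * ln (1 + x) <= Rpower (1 + x) (r - 1)).
  { unfold Rpower. apply exp_ineq1_le. }
  assert (H2 : (r - 1) * (x / (1 + x)) <= (r - 1) * ln (1 + x)).
  { apply Rmult_le_compat_l; lra. }
  assert (E2 : (1 + x) * (1 + (r - 1) * (x / (1 + x))) = 1 + r * x) by (field; lra).
  rewrite <- E2. apply Rmult_le_compat_l; lra.
Qed.

Lemma tangent x b : 0 < x -> 0 < b <= 1 -> Rpower x b <= 1 + b * (x - 1).
Proof.
  intros Hx Hb.
  set (y := Rpower x b).
  assert (Hy : 0 < y) by (unfold y, Rpower; apply exp_pos).
  assert (Ex : Rpower y (/ b) = x).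
  { unfold y. rewrite Rpower_mult. replace (b * / b) with 1 by (field; lra).
    apply Rpower_1; lra. }
  assert (Hr : 1 <= / b).
  { rewrite <- Rinv_1. apply Rinv_le_contravar; lra. }
  assert (B := bernoulli (y - 1) (/ b) ltac:(lra) Hr).
  replace (1 + (y - 1)) with y in B by ring. rewrite Ex in B.
  assert (b * (/ b * (y - 1)) = y - 1) by (field; lra).
  assert (b * (1 + / b * (y - 1)) <= b * x) by (apply Rmult_le_compat_l; lra).
  nra.
Qed.

Lemma tangent_rel m y b : 0 < m -> 0 < y -> 0 < b <= 1 ->
  Rpower y b <= Rpower m b * (1 + b * (y / m - 1)).
Proof.
  intros Hm Hy Hb.
  replace y with (m * (y / m)) at 1 by (field; lra).
  rewrite <- Rpower_mult_distr by (try apply Rdiv_lt_0_compat; lra).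
  apply Rmult_le_compat_l.
  - left; unfold Rpower; apply exp_pos.
  - apply tangent; [apply Rdiv_lt_0_compat|]; lra.
Qed.

Lemma omega0 alpha : omega alpha 0 = 1.
Proof. unfold omega, natpow. simpl. rewrite Rpower_base1. ring. Qed.

Lemma omega_nonneg alpha s : 0 < alpha < 1 -> 0 <= omega alpha s.
Proof.
  intros Ha. unfold omega. destruct s.
  - simpl. rewrite Rpower_base1. lra.
  - change (0 <= Rpower (INR (S (S s))) (1 - alpha) - Rpower (INR (S s)) (1 - alpha)).
    assert (Rpower (INR (S s)) (1 - alpha) <= Rpower (INR (S (S s))) (1 - alpha)).
    { apply Rle_Rpower_l; [lra|]. split. apply lt_0_INR; lia. apply le_INR; lia. }
    lra.
Qed.

Lemma omega_decr alpha s : 0 < alpha < 1 -> omega alpha (S s) <= omega alpha s.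
Proof.
  intros Ha. unfold omega. destruct s.
  - change (Rpower (INR 2) (1 - alpha) - Rpower (INR 1) (1 - alpha) <=
            Rpower (INR 1) (1 - alpha) - 0).
    simpl INR. rewrite Rpower_base1.
    assert (T := tangent (1+1) (1 - alpha) ltac:(lra) ltac:(lra)). lra.
  - change (Rpower (INR (S (S (S s)))) (1 - alpha) - Rpower (INR (S (S s))) (1 - alpha) <=
            Rpower (INR (S (S s))) (1 - alpha) - Rpower (INR (S s)) (1 - alpha)).
    set (m := INR (S (S s))).
    assert (Hm : 2 <= m).
    { unfold m. rewrite !S_INR. assert (0 <= INR s) by apply pos_INR. lra. }
    assert (E1 : INR (S (S (S s))) = m + 1) by (unfold m; rewrite (S_INR (S (S s))); ring).
    assert (E2 : INR (S s) = m - 1) by (unfold m; rewrite (S_INR (S s)); ring).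
    rewrite E1, E2.
    assert (T1 := tangent_rel m (m + 1) (1 - alpha) ltac:(lra) ltac:(lra) ltac:(lra)).
    assert (T2 := tangent_rel m (m - 1) (1 - alpha) ltac:(lra) ltac:(lra) ltac:(lra)).
    assert (E3 : (1 + (1 - alpha) * ((m + 1) / m - 1)) + (1 + (1 - alpha) * ((m - 1) / m - 1)) = 2)
      by (field; lra).
    assert (Rpower m (1 - alpha) * (1 + (1 - alpha) * ((m + 1) / m - 1)) +
            Rpower m (1 - alpha) * (1 + (1 - alpha) * ((m - 1) / m - 1)) = 2 * Rpower m (1 - alpha)).
    { rewrite <- Rmult_plus_distr_l, E3. ring. }
    lra.
Qed.

Lemma lim_ge u l c : Un_cv u l -> (forall n, (1 <= n)%nat -> c <= u n) -> c <= l.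
Proof.
  intros Hu Hc. destruct (Rle_or_lt c l) as [|Hlt]; auto.
  destruct (Hu (c - l)) as [N HN]; [lra|].
  specialize (HN (max N 1) ltac:(lia)). specialize (Hc (max N 1) ltac:(lia)).
  unfold R_dist in HN. apply Rabs_def2 in HN. lra.
Qed.

Lemma gauss_step s n : 1 <= s -> (1 <= n)%nat -> gauss_seq s n <= gauss_seq s (S n).
Proof.
  intros Hs Hn. unfold gauss_seq.
  assert (HnR : 1 <= INR n) by (apply (le_INR 1); lia).
  set (F := INR (fact n)).
  assert (HF : 0 < F) by (apply lt_0_INR, lt_O_fact).
  assert (HP : forall m, 0 < prod_f_R0 (fun m => s + INR m) m).
  { induction m; cbn [prod_f_R0]. simpl INR; lra.
    apply Rmult_lt_0_compat; auto. assert (0 <= INR (S m)) by apply pos_INR. lra. }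
  set (Pi := prod_f_R0 (fun m => s + INR m) n).
  assert (HPi : 0 < Pi) by apply HP.
  change (prod_f_R0 (fun m => s + INR m) (S n)) with (Pi * (s + INR (S n))).
  rewrite fact_simpl, mult_INR. fold F.
  rewrite S_INR.
  set (P0 := Rpower (INR n) s).
  assert (HP0 : 0 < P0) by (unfold P0, Rpower; apply exp_pos).
  assert (E : Rpower (INR n + 1) s = P0 * Rpower (1 + / INR n) s).
  { unfold P0. rewrite Rpower_mult_distr by (try apply Rplus_lt_0_compat; try apply Rinv_0_lt_compat; lra).
    f_equal. field. lra. }
  rewrite E.
  assert (B := bernoulli (/ INR n) s ltac:(assert (0 < / INR n) by (apply Rinv_0_lt_compat; lra); lra) Hs).
  set (Q := Rpower (1 + / INR n) s) in *.
  assert (K : (INR n + 1) * Q - (s + (INR n + 1)) >= 0).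
  { assert ((INR n + 1) * (1 + s * / INR n) - (s + (INR n + 1)) = s / INR n) by (field; lra).
    assert (0 < s / INR n) by (apply Rdiv_lt_0_compat; lra).
    assert ((INR n + 1) * (1 + s * / INR n) <= (INR n + 1) * Q) by (apply Rmult_le_compat_l; lra).
    lra. }
  assert (E2 : (INR n + 1) * F * (P0 * Q) / (Pi * (s + (INR n + 1))) - F * P0 / Pi
             = (F * P0 / Pi) * (((INR n + 1) * Q - (s + (INR n + 1))) / (s + (INR n + 1)))) by (field; lra).
  assert (0 <= (F * P0 / Pi) * (((INR n + 1) * Q - (s + (INR n + 1))) / (s + (INR n + 1)))).
  { apply Rmult_le_pos. left. apply Rdiv_lt_0_compat; [apply Rmult_lt_0_compat|]; auto.
    unfold Rdiv; apply Rmult_le_pos; [lra|left; apply Rinv_0_lt_compat; lra]. }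
  lra.
Qed.

Lemma Gamma_pos s G : 1 <= s -> is_Gamma s G -> 0 < G.
Proof.
  intros Hs HG.
  assert (H1 : gauss_seq s 1 = / (s * (s + 1))).
  { unfold gauss_seq. simpl. rewrite Rpower_base1. field. lra. }
  assert (Hpos : 0 < gauss_seq s 1) by (rewrite H1; apply Rinv_0_lt_compat; nra).
  assert (Hm : forall n, (1 <= n)%nat -> gauss_seq s 1 <= gauss_seq s n).
  { intros n Hn. induction n; [lia|]. destruct (Nat.eq_dec n 0). subst; lra.
    eapply Rle_trans; [apply IHn; lia|]. apply gauss_step; auto; lia. }
  assert (gauss_seq s 1 <= G) by (eapply lim_ge; eauto). lra.
Qed.

Lemma abs_le x M : Rabs x <= M -> -M <= x <= M.
Proof. unfold Rabs; destruct Rcase_abs; lra. Qed.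

Lemma sum_bound n : forall (w u : nat -> R) M,
  (forall s, 0 <= w s) -> (forall s, w (S s) <= w s) ->
  (forall l, (l <= n)%nat -> Rabs (u l) <= M) ->
  w 0%nat * u (S n) - w 0%nat * M
    <= sum_f_R0 (fun s => w s * (u (n - s + 1)%nat - u (n - s)%nat)) n
    <= w 0%nat * u (S n) + w 0%nat * M.
Proof.
  induction n; intros w u M Hw Hd Hu.
  - simpl. assert (H := abs_le _ _ (Hu 0%nat (le_n _))).
    assert (w 0%nat * u 0%nat <= w 0%nat * M) by (apply Rmult_le_compat_l; auto; lra).
    assert (w 0%nat * (- M) <= w 0%nat * u 0%nat).
    { apply Rmult_le_compat_l; auto; lra. }
    lra.
  - rewrite decomp_sum by lia. simpl pred.
    replace (S n - 0 + 1)%nat with (S (S n)) by lia.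
    replace (S n - 0)%nat with (S n) by lia.
    assert (IH := IHn (fun s => w (S s)) u M (fun s => Hw (S s)) (fun s => Hd (S s))
                   (fun l Hl => Hu l ltac:(lia))).
    simpl in IH.
    change (sum_f_R0 (fun i => w (S i) * (u (S n - S i + 1)%nat - u (S n - S i)%nat)) n)
      with (sum_f_R0 (fun s => w (S s) * (u (n - s + 1)%nat - u (n - s)%nat)) n).
    assert (H := abs_le _ _ (Hu (S n) (le_n _))).
    assert (H0 := Hw 0%nat). assert (H1 := Hw 1%nat). assert (H01 := Hd 0%nat).
    assert (0 <= (w 0%nat - w 1%nat) * (M - u (S n))) by (apply Rmult_le_pos; lra).
    assert (0 <= (w 0%nat - w 1%nat) * (M + u (S n))) by (apply Rmult_le_pos; lra).
    lra.
Qed.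

Lemma fold_nonneg l : 0 <= fold_right Rmax 0 l.
Proof. induction l; simpl. lra. eapply Rle_trans; [apply IHl| apply Rmax_r]. Qed.

Lemma fold_ge l x : In x l -> x <= fold_right Rmax 0 l.
Proof.
  induction l; simpl; [tauto|]. intros [->|H]. apply Rmax_l.
  eapply Rle_trans; [apply IHl, H| apply Rmax_r].
Qed.

Lemma fold_att l : fold_right Rmax 0 l = 0 \/ In (fold_right Rmax 0 l) l.
Proof.
  induction l; simpl; [auto|].
  destruct (Rle_dec a (fold_right Rmax 0 l)) as [r|r].
  - rewrite Rmax_right by exact r. destruct IHl as [->|H].
    left; reflexivity. right; right; exact H.
  - rewrite Rmax_left by lra. right; left; reflexivity.
Qed.

Lemma fold_le l M : (forall x, In x l -> x <= M) -> 0 <= M -> fold_right Rmax 0 l <= M.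
Proof.
  induction l; simpl; intros H HM; auto. apply Rmax_lub; auto.
Qed.

Lemma in_im Nx Ny (e : nat -> nat -> R) x :
  In x (flat_map (fun i => map (fun j => Rabs (e i j)) (seq 1 (Ny - 1))) (seq 1 (Nx - 1)))
  <-> exists i j, (1 <= i <= Nx - 1)%nat /\ (1 <= j <= Ny - 1)%nat /\ x = Rabs (e i j).
Proof.
  rewrite in_flat_map. split.
  - intros [i [Hi Hx]]. apply in_map_iff in Hx. destruct Hx as [j [Hj Hj']].
    apply in_seq in Hi. apply in_seq in Hj'. exists i, j. repeat split; auto; lia.
  - intros [i [j [Hi [Hj ->]]]]. exists i. split. apply in_seq; lia.
    apply in_map_iff. exists j. split; auto. apply in_seq; lia.
Qed.

Lemma im_ge Nx Ny e i j : (1 <= i <= Nx - 1)%nat -> (1 <= j <= Ny - 1)%nat ->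
  Rabs (e i j) <= interior_max Nx Ny e.
Proof. intros. apply fold_ge, in_im. eauto 6. Qed.

Lemma im_nonneg Nx Ny e : 0 <= interior_max Nx Ny e.
Proof. apply fold_nonneg. Qed.

Lemma im_le Nx Ny e M : (forall i j, (1 <= i <= Nx - 1)%nat -> (1 <= j <= Ny - 1)%nat ->
  Rabs (e i j) <= M) -> 0 <= M -> interior_max Nx Ny e <= M.
Proof.
  intros H HM. apply fold_le; auto. intros x Hx. apply in_im in Hx.
  destruct Hx as [i [j [Hi [Hj ->]]]]. auto.
Qed.

Lemma im_att Nx Ny e : interior_max Nx Ny e = 0 \/
  exists i j, (1 <= i <= Nx - 1)%nat /\ (1 <= j <= Ny - 1)%nat /\ interior_max Nx Ny e = Rabs (e i j).
Proof.
  destruct (fold_att (flat_map (fun i => map (fun j => Rabs (e i j)) (seq 1 (Ny - 1))) (seq 1 (Nx - 1))))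
   as [H|H]; [left; exact H| right]. apply in_im in H. exact H.
Qed.

Lemma key (sg Sd Ep Ex1 Ex2 Ey1 Ey2 a b c d dx dy N M : R) :
  0 < sg -> 0 < dx -> 0 < dy -> 0 <= a -> a * dx <= 2 * c -> 0 <= b -> b * dy <= 2 * d ->
  0 <= c -> 0 <= d ->
  Rabs Ex1 <= N -> Rabs Ex2 <= N -> Rabs Ey1 <= N -> Rabs Ey2 <= N -> Rabs Ep = N ->
  Ep - M <= Sd <= Ep + M ->
  sg * Sd + a * (Ex1 - Ex2) / (2 * dx) + b * (Ey1 - Ey2) / (2 * dy)
  = c * (Ex1 - 2 * Ep + Ex2) / (dx * dx) + d * (Ey1 - 2 * Ep + Ey2) / (dy * dy) ->
  N <= M.
Proof.
  intros Hs Hdx Hdy Ha Hac Hb Hbd Hc Hd H1 H2 H3 H4 Hp HS Heq.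
  set (p1 := c / (dx * dx) - a / (2 * dx)).
  set (p2 := c / (dx * dx) + a / (2 * dx)).
  set (q1 := d / (dy * dy) - b / (2 * dy)).
  set (q2 := d / (dy * dy) + b / (2 * dy)).
  assert (E : sg * Sd = p1 * Ex1 + p2 * Ex2 + q1 * Ey1 + q2 * Ey2 - (p1 + p2 + q1 + q2) * Ep).
  { assert (sg * Sd = c * (Ex1 - 2 * Ep + Ex2) / (dx * dx) + d * (Ey1 - 2 * Ep + Ey2) / (dy * dy)
       - a * (Ex1 - Ex2) / (2 * dx) - b * (Ey1 - Ey2) / (2 * dy)) by lra.
    rewrite H. unfold p1, p2, q1, q2. field. lra. }
  assert (P1 : 0 <= p1).
  { replace p1 with ((2 * c - a * dx) * / (2 * dx * dx)) by (unfold p1; field; lra).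
    apply Rmult_le_pos; [lra| left; apply Rinv_0_lt_compat; nra]. }
  assert (P2 : 0 <= p2).
  { unfold p2. assert (0 <= c / (dx * dx)) by (unfold Rdiv; apply Rmult_le_pos; [lra| left; apply Rinv_0_lt_compat; nra]).
    assert (0 <= a / (2 * dx)) by (unfold Rdiv; apply Rmult_le_pos; [lra| left; apply Rinv_0_lt_compat; nra]). lra. }
  assert (Q1 : 0 <= q1).
  { replace q1 with ((2 * d - b * dy) * / (2 * dy * dy)) by (unfold q1; field; lra).
    apply Rmult_le_pos; [lra| left; apply Rinv_0_lt_compat; nra]. }
  assert (Q2 : 0 <= q2).
  { unfold q2. assert (0 <= d / (dy * dy)) by (unfold Rdiv; apply Rmult_le_pos; [lra| left; apply Rinv_0_lt_compat; nra]).
    assert (0 <= b / (2 * dy)) by (unfold Rdiv; apply Rmult_le_pos; [lra| left; apply Rinv_0_lt_compat; nra]). lra. }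
  apply abs_le in H1; apply abs_le in H2; apply abs_le in H3; apply abs_le in H4.
  assert (A1 : p1 * Ex1 <= p1 * N) by (apply Rmult_le_compat_l; lra).
  assert (A2 : p2 * Ex2 <= p2 * N) by (apply Rmult_le_compat_l; lra).
  assert (A3 : q1 * Ey1 <= q1 * N) by (apply Rmult_le_compat_l; lra).
  assert (A4 : q2 * Ey2 <= q2 * N) by (apply Rmult_le_compat_l; lra).
  assert (B1 : p1 * (- N) <= p1 * Ex1) by (apply Rmult_le_compat_l; lra).
  assert (B2 : p2 * (- N) <= p2 * Ex2) by (apply Rmult_le_compat_l; lra).
  assert (B3 : q1 * (- N) <= q1 * Ey1) by (apply Rmult_le_compat_l; lra).
  assert (B4 : q2 * (- N) <= q2 * Ey2) by (apply Rmult_le_compat_l; lra).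
  unfold Rabs in Hp. destruct Rcase_abs as [Hn|Hn].
  - assert (sg * (Ep + M) >= sg * Sd) by (apply Rle_ge, Rmult_le_compat_l; lra).
    assert (sg * (Ep + M) >= 0) by nra.
    nra.
  - assert (sg * (Ep - M) <= sg * Sd) by (apply Rmult_le_compat_l; lra).
    assert (sg * (Ep - M) <= 0) by nra.
    nra.
Qed.

Lemma grid_pos (L : R) (i N : nat) : 0 <= L -> (i <= N)%nat -> (0 < N)%nat ->
  0 <= INR i * (L / INR N) <= L.
Proof.
  intros HL Hi HN. assert (HNR : 0 < INR N) by (apply lt_0_INR; lia).
  assert (Hq : 0 <= L / INR N) by (unfold Rdiv; apply Rmult_le_pos; [lra|left; apply Rinv_0_lt_compat; lra]).
  assert (E : L = INR N * (L / INR N)) by (field; lra).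
  split. apply Rmult_le_pos; [apply pos_INR|lra].
  rewrite E at 2. apply Rmult_le_compat_r; auto. apply le_INR; auto.
Qed.

Theorem mainTheorem2
  (alpha T xL xR yL yR A D G : R) (Nx Ny Nt : nat)
  (a b c d f : R -> R -> R -> R) (psi psit : R -> R -> R)
  (v vt : nat -> nat -> nat -> R) :
  0 < alpha < 1 -> 0 < T -> xL < xR -> yL < yR ->
  (0 < Nx)%nat -> (0 < Ny)%nat -> (0 < Nt)%nat ->
  is_Gamma (2 - alpha) G ->
  0 < A -> 0 < D ->
  (forall x y t, xL <= x <= xR -> yL <= y <= yR -> 0 <= t <= T ->
     0 <= a x y t <= A /\ 0 <= b x y t <= A /\ D <= c x y t /\ D <= d x y t) ->
  Rmax ((xR - xL) / INR Nx) ((yR - yL) / INR Ny) <= 2 * D / A ->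
  IFDS alpha G xL xR yL yR T Nx Ny Nt a b c d f psi v ->
  IFDS alpha G xL xR yL yR T Nx Ny Nt a b c d f psit vt ->
  forall k, (1 <= k <= Nt)%nat ->
    interior_max Nx Ny (fun i j => v i j k - vt i j k)
    <= interior_max Nx Ny (fun i j => v i j 0%nat - vt i j 0%nat).
Proof.
  intros Ha HT Hx Hy HNx HNy HNt HG HA HD Hbd Hmax Hv Hvt.
  unfold IFDS in Hv, Hvt. cbv zeta in Hv, Hvt.
  destruct Hv as [_ [Hbv Hsv]]. destruct Hvt as [_ [Hbvt Hsvt]].
  set (dx := (xR - xL) / INR Nx) in *.
  set (dy := (yR - yL) / INR Ny) in *.
  set (dt := T / INR Nt) in *.
  set (M0 := interior_max Nx Ny (fun i j => v i j 0%nat - vt i j 0%nat)).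
  assert (HM0 : 0 <= M0) by apply im_nonneg.
  assert (Hdx : 0 < dx) by (apply Rdiv_lt_0_compat; [lra| apply lt_0_INR; lia]).
  assert (Hdy : 0 < dy) by (apply Rdiv_lt_0_compat; [lra| apply lt_0_INR; lia]).
  assert (Hdt : 0 < dt) by (apply Rdiv_lt_0_compat; [lra| apply lt_0_INR; lia]).
  assert (HGp : 0 < G) by (apply (Gamma_pos (2 - alpha)); auto; lra).
  assert (Hsg : 0 < Defs.sigma alpha dt G).
  { unfold Defs.sigma. apply Rinv_0_lt_compat, Rmult_lt_0_compat; auto. unfold Rpower; apply exp_pos. }
  assert (HAdx : A * dx <= 2 * D).
  { assert (dx <= 2 * D / A) by (eapply Rle_trans; [apply Rmax_l| exact Hmax]).
    assert (A * dx <= A * (2 * D / A)) by (apply Rmult_le_compat_l; lra).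
    replace (A * (2 * D / A)) with (2 * D) in H0 by (field; lra). lra. }
  assert (HAdy : A * dy <= 2 * D).
  { assert (dy <= 2 * D / A) by (eapply Rle_trans; [apply Rmax_r| exact Hmax]).
    assert (A * dy <= A * (2 * D / A)) by (apply Rmult_le_compat_l; lra).
    replace (A * (2 * D / A)) with (2 * D) in H0 by (field; lra). lra. }
  set (e := fun i j k => v i j k - vt i j k).
  assert (P : forall k, (k <= Nt)%nat -> forall l, (l <= k)%nat -> forall i j,
            (1 <= i <= Nx - 1)%nat -> (1 <= j <= Ny - 1)%nat -> Rabs (e i j l) <= M0).
  { induction k; intros Hk l Hl i j Hi Hj.
    - replace l with 0%nat by lia. apply (im_ge Nx Ny (fun i j => v i j 0%nat - vt i j 0%nat)); auto.
    - destruct (Nat.le_gt_cases l k) as [Hlk|Hlk]; [apply IHk; auto; lia|].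
      replace l with (S k) by lia. clear l Hl Hlk.
      set (N := interior_max Nx Ny (fun i j => e i j (S k))).
      assert (HN : N <= M0).
      { destruct (im_att Nx Ny (fun i j => e i j (S k))) as [H0|[i0 [j0 [Hi0 [Hj0 HNe]]]]].
        - fold N in H0. lra.
        - fold N in HNe.
          assert (Hnb : forall i' j', (i' <= Nx)%nat -> (j' <= Ny)%nat -> Rabs (e i' j' (S k)) <= N).
          { intros i' j' Hi' Hj'.
            destruct (Nat.le_gt_cases 1 i'); destruct (Nat.le_gt_cases i' (Nx - 1));
            destruct (Nat.le_gt_cases 1 j'); destruct (Nat.le_gt_cases j' (Ny - 1));
            try (apply (im_ge Nx Ny (fun i j => e i j (S k))); lia);
            (unfold e; rewrite (Hbv i' j' (S k)), (Hbvt i' j' (S k)) by lia;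
             rewrite Rminus_0_r, Rabs_R0; apply im_nonneg). }
          assert (Hxi := grid_pos (xR - xL) i0 Nx ltac:(lra) ltac:(lia) HNx).
          assert (Hyj := grid_pos (yR - yL) j0 Ny ltac:(lra) ltac:(lia) HNy).
          assert (Htk := grid_pos T (S k) Nt ltac:(lra) Hk HNt).
          fold dx in Hxi. fold dy in Hyj. fold dt in Htk.
          destruct (Hbd (xL + INR i0 * dx) (yL + INR j0 * dy) (INR (S k) * dt)
                      ltac:(lra) ltac:(lra) ltac:(lra)) as [[Ha0 Ha1] [[Hb0 Hb1] [Hc Hd]]].
          assert (HS := sum_bound k (omega alpha) (fun l => e i0 j0 l) M0
                    (fun s => omega_nonneg alpha s Ha) (fun s => omega_decr alpha s Ha)
                    (fun l Hl => IHk ltac:(lia) l Hl i0 j0 Hi0 Hj0)).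
          rewrite omega0 in HS. cbv beta in HS.
          assert (E1 := Hsv i0 j0 k Hi0 Hj0 ltac:(lia)).
          assert (E2 := Hsvt i0 j0 k Hi0 Hj0 ltac:(lia)).
          set (Sv := sum_f_R0 _ k) in E1.
          set (Svt := sum_f_R0 _ k) in E2.
          assert (ES : Sv - Svt = sum_f_R0 (fun s => omega alpha s *
                        (e i0 j0 (k - s + 1)%nat - e i0 j0 (k - s)%nat)) k).
          { unfold Sv, Svt. rewrite <- minus_sum. apply sum_eq. intros. unfold e. ring. }
          rewrite <- ES in HS.
          apply (key (Defs.sigma alpha dt G) (Sv - Svt) (e i0 j0 (S k))
                   (e (S i0) j0 (S k)) (e (i0 - 1)%nat j0 (S k))
                   (e i0 (S j0) (S k)) (e i0 (j0 - 1)%nat (S k))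
                   (a (xL + INR i0 * dx) (yL + INR j0 * dy) (INR (S k) * dt))
                   (b (xL + INR i0 * dx) (yL + INR j0 * dy) (INR (S k) * dt))
                   (c (xL + INR i0 * dx) (yL + INR j0 * dy) (INR (S k) * dt))
                   (d (xL + INR i0 * dx) (yL + INR j0 * dy) (INR (S k) * dt))
                   dx dy N M0); auto; try lra.
          + nra.
          + nra.
          + apply Hnb; lia.
          + apply Hnb; lia.
          + apply Hnb; lia.
          + apply Hnb; lia.
          + unfold e. unfold Rdiv in *. lra. }
      eapply Rle_trans; [| exact HN].
      apply (im_ge Nx Ny (fun i j => e i j (S k))); auto. }
  intros k Hk. apply im_le; auto. intros i j Hi Hj.
  apply (P k ltac:(lia) k (le_n _) i j Hi Hj).
Qed.
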